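(* Let $r\ge1$ be an integer and let $G$ be an $(r+1)$-path degenerate graph. If $G$ is a forest, then $\mathrm{arb}_r(G)=1$; otherwise $\mathrm{arb}_r(G)=r+1$.
   Context: Graphs are finite and simple. For an integer $r\ge1$, the generalized $r$-arboricity $\mathrm{arb}_r(G)$ is the minimum number of colors in a (not necessarily proper) coloring of the edges of $G$ such that every cycle $C$ of $G$ receives at least $\min\{|C|,r+1\}$ distinct colors ($|C|$ being the length of $C$). A strict ear of a graph $G$ is a path of $G$ whose internal vertices all have degree $2$ in $G$ and whose two endpoints are distinct. For an integer $p\ge1$, a $p$-reduction of $G$ is the deletion of either an isolated vertex, or a vertex of degree $1$, or the internal vertices of a strict ear of $G$ of length at least $p$. A graph is $p$-path degenerate if it can be reduced to the empty graph by a sequence of $p$-reductions. *)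

(* Defs.v *)
From mathcomp Require Import all_boot.
Set Implicit Arguments. Unset Strict Implicit. Unset Printing Implicit Defensive.

(* A simple graph on a finite vertex type T: symmetric irreflexive relation e.
   Subgraphs arising from reductions are the induced subgraphs G[V], V : {set T}. *)
Definition simple_graph (T : finType) (e : rel T) : Prop :=
  symmetric e /\ irreflexive e.

Section Graphs.
Variables (T : finType) (e : rel T).

Definition deg (V : {set T}) (x : T) : nat := #|[set y in V | e x y]|.

(* Its edges are
   {x, next c x} for x in c, and its length is size c. *)
Definition is_cycle (V : {set T}) (c : seq T) : Prop :=
  [/\ uniq c, 3 <= size c, all (fun x => x \in V) c & cycle e c].

Definition cycle_colors (k : nat) (col : {set T} -> 'I_k) (c : seq T) : {set 'I_k} :=
  [set col [set x; next c x] | x in c].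

(* col is an edge-coloring with colors in 'I_k (edges are 2-element vertex sets;
   values on non-edges are irrelevant) such that every cycle C receives at least
   min(|C|, r+1) colors *)
Definition good_coloring (r : nat) (V : {set T}) (k : nat) (col : {set T} -> 'I_k) : Prop :=
  forall c, is_cycle V c -> minn (size c) r.+1 <= #|cycle_colors col c|.

Definition r_colorable (r : nat) (V : {set T}) (k : nat) : Prop :=
  exists col : {set T} -> 'I_k, good_coloring r V col.

Definition arb_is (r : nat) (V : {set T}) (k : nat) : Prop :=
  r_colorable r V k /\ forall k', r_colorable r V k' -> k <= k'.

Definition forest (V : {set T}) : Prop := forall c, ~ is_cycle V c.

(* strict ear of G[V]: path a, m_1, ..., m_j, b of distinct vertices of V,
   consecutive ones adjacent, internal vertices m of degree 2 in G[V];
   its length is j+1 = (size m).+1 *)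
Definition strict_ear (V : {set T}) (a : T) (m : seq T) (b : T) : Prop :=
  [/\ path e a (rcons m b), uniq (a :: rcons m b),
      all (fun x => x \in V) (a :: rcons m b)
    & all (fun x => deg V x == 2) m].

Inductive p_reduction (p : nat) (V : {set T}) : {set T} -> Prop :=
  | red_isolated v : v \in V -> deg V v = 0 -> p_reduction p V (V :\ v)
  | red_leaf v : v \in V -> deg V v = 1 -> p_reduction p V (V :\ v)
  | red_ear a m b : strict_ear V a m b -> p <= (size m).+1 ->
      p_reduction p V (V :\: [set x in m]).

Inductive path_degenerate (p : nat) : {set T} -> Prop :=
  | pd_empty : path_degenerate p set0
  | pd_step V W : p_reduction p V W -> path_degenerate p W -> path_degenerate p V.

End Graphs.

(* Main.v *)
Require Import Defs.
From mathcomp Require Import all_boot.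
Set Implicit Arguments. Unset Strict Implicit. Unset Printing Implicit Defensive.

Section Proof.
Variables (T : finType) (e : rel T).
Hypothesis esym : symmetric e.
Hypothesis eirr : irreflexive e.

Definition nb (V : {set T}) (x : T) := [set y in V | e x y].

Lemma prev_neq_next (c : seq T) u : uniq c -> 3 <= size c -> u \in c ->
  prev c u != next c u.
Proof.
move=> Uc Sc uc; case: (rot_to uc) => i s' Hr.
have Uc' : uniq (u :: s') by rewrite -Hr rot_uniq.
have Sc' : 3 <= size (u :: s') by rewrite -Hr size_rot.
apply/eqP => Heq.
have H1 : next c (next c u) = u by rewrite -{1}Heq next_prev.
rewrite -!(next_rot i Uc) Hr in H1.
move: Uc' Sc' H1; case: s' {Hr} => [|v [|w t]] //=.
rewrite !inE => /andP [/norP [uv /norP [uw _]] _] _.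
rewrite /next /= eqxx eq_sym (negbTE uv) eqxx => wu.
by rewrite wu eqxx in uw.
Qed.

Lemma cyc_nb V c u : is_cycle e V c -> u \in c ->
  next c u \in nb V u /\ prev c u \in nb V u.
Proof.
case=> Uc Sc /allP Ac Cc uc; rewrite !inE.
rewrite Ac ?mem_next // Ac ?mem_prev // next_cycle //.
by rewrite esym prev_cycle.
Qed.

Lemma card2_cases (N : {set T}) x y z : #|N| = 2 -> x \in N -> y \in N ->
  x != y -> z \in N -> z = x \/ z = y.
Proof.
move=> cN xN yN xy zN.
have : [set x; y] == N.
  rewrite eqEcard cards2 xy cN leqnn andbT.
  by apply/subsetP => w /set2P [] ->.
by move/eqP => E; move: zN; rewrite -E => /set2P.
Qed.

Lemma cyc_deg V c u : is_cycle e V c -> u \in c -> 2 <= deg e V u.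
Proof.
move=> Hc uc; have [Hn Hp] := cyc_nb Hc uc.
case: Hc => Uc Sc _ _.
have -> : 2 = #|[set prev c u; next c u]| by rewrite cards2 prev_neq_next.
by apply: subset_leq_card; apply/subsetP => w /set2P [] ->.
Qed.

Lemma cycle_nbr V c u w : is_cycle e V c -> u \in c -> deg e V u = 2 ->
  w \in nb V u -> w = next c u \/ w = prev c u.
Proof.
move=> Hc uc du wN; have [Hn Hp] := cyc_nb Hc uc.
case: (Hc) => Uc Sc _ _.
by apply: (card2_cases du) => //; rewrite eq_sym prev_neq_next.
Qed.

Lemma cycle_edge V c u w : is_cycle e V c -> u \in c -> deg e V u = 2 ->
  w \in nb V u -> exists2 x, x \in c & [set x; next c x] = [set u; w].
Proof.
move=> Hc uc du wN; case: (cycle_nbr Hc uc du wN) => ->.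
  by exists u.
case: (Hc) => Uc _ _ _.
exists (prev c u); first by rewrite mem_prev.
by rewrite next_prev // setUC.
Qed.


Section Ear.
Variables (V : {set T}) (a : T) (m : seq T) (b : T).
Hypothesis Hear : strict_ear e V a m b.
Let s := a :: rcons m b.
Let L := size m.

Lemma s_size : size s = L.+2.
Proof. by rewrite /s /= size_rcons. Qed.

Lemma s_uniq : uniq s.
Proof. by case: Hear. Qed.

Lemma s_int j : j < L -> nth a s j.+1 = nth a m j.
Proof. by move=> jL; rewrite /s /= nth_rcons jL. Qed.

Lemma s_in_m j : j < L -> nth a s j.+1 \in m.
Proof. by move=> jL; rewrite s_int // mem_nth. Qed.

Lemma s_deg j : j < L -> deg e V (nth a s j.+1) = 2.
Proof.
move=> jL; case: Hear => _ _ _ /allP Hd.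
by apply/eqP; apply: Hd; apply: s_in_m.
Qed.

Lemma s_V i : i < L.+2 -> nth a s i \in V.
Proof.
move=> iL; case: Hear => _ _ /allP Ha _.
by apply: Ha; rewrite mem_nth // s_size.
Qed.

Lemma s_e i : i < L.+1 -> e (nth a s i) (nth a s i.+1).
Proof.
move=> iL; case: Hear => /(pathP a) Hp _ _ _.
by apply: Hp; rewrite size_rcons.
Qed.

Lemma s_nb j : j < L ->
  nth a s j \in nb V (nth a s j.+1) /\ nth a s j.+2 \in nb V (nth a s j.+1).
Proof.
move=> jL; rewrite !inE; split; apply/andP; split.
- by apply: s_V; apply: (@leq_trans L.+1) => //; apply: ltnW.
- by rewrite esym; apply: s_e; apply: ltnW.
- by apply: s_V.
- by apply: s_e.
Qed.

Lemma s_prop c j : is_cycle e V c -> j < L -> nth a s j.+1 \in c ->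
  nth a s j \in c /\ nth a s j.+2 \in c.
Proof.
move=> Hc jL uc; have [n1 n2] := s_nb jL.
have [Hn Hp] := cyc_nb Hc uc.
split.
  by case: (cycle_nbr Hc uc (s_deg jL) n1) => ->; rewrite ?mem_next ?mem_prev.
by case: (cycle_nbr Hc uc (s_deg jL) n2) => ->; rewrite ?mem_next ?mem_prev.
Qed.

Lemma s_all_in c x : is_cycle e V c -> x \in c -> x \in m ->
  forall i, i < L.+2 -> nth a s i \in c.
Proof.
move=> Hc xc xm.
have [k kL xk] : exists2 k, k < L & nth a s k.+1 \in c.
  exists (index x m); first by rewrite index_mem.
  by rewrite s_int ?index_mem // nth_index.
have up : forall i, k.+1 <= i -> i < L.+2 -> nth a s i \in c.
  elim=> [//|i IH] H1 H2.
  rewrite leq_eqVlt in H1; case/orP: H1 => [/eqP <- //|H1].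
  have := IH H1 (ltnW H2).
  case: i {IH} H1 H2 => [//|j] H1 H2 Hin.
  by case: (s_prop Hc _ Hin).
have down : forall d i, i + d = k.+1 -> nth a s i \in c.
  elim=> [|d IH] i H; first by move: H; rewrite addn0 => ->.
  have Hin : nth a s i.+1 \in c by apply: IH; rewrite addSn -addnS.
  have iL : i < L.
    by apply: leq_ltn_trans _ kL; rewrite -ltnS -H addnS ltnS leq_addr.
  by case: (s_prop Hc iL Hin).
move=> i iL; case: (leqP k.+1 i) => ik; first exact: up.
by apply: (down (k.+1 - i)); rewrite subnKC // ltnW.
Qed.

Lemma s_size_cycle c x : is_cycle e V c -> x \in c -> x \in m -> L.+2 <= size c.
Proof.
move=> Hc xc xm; rewrite -s_size; apply: uniq_leq_size; first exact: s_uniq.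
move=> y ys; rewrite -(nth_index a ys); apply: (s_all_in Hc xc xm).
by rewrite -s_size index_mem.
Qed.

End Ear.

Lemma cycle_sub V (X : {set T}) c : is_cycle e V c -> (forall x, x \in c -> x \notin X) ->
  is_cycle e (V :\: X) c.
Proof.
case=> U S /allP A C H; split => //; apply/allP => x xc.
by rewrite inE H // A.
Qed.

Lemma cycle_avoid_low V v c : is_cycle e V c -> deg e V v <= 1 ->
  forall x, x \in c -> x \notin [set v].
Proof.
move=> Hc dv x xc; rewrite inE; apply/eqP => xv; subst x.
by have := cyc_deg Hc xc; rewrite ltnNge dv.
Qed.

Lemma setD1_eq (V : {set T}) v : V :\ v = V :\: [set v].
Proof. by []. Qed.

Lemma ear_color V a m b r (col : {set T} -> 'I_r.+1) :
  strict_ear e V a m b -> r.+1 <= (size m).+1 ->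
  good_coloring e r (V :\: [set x in m]) col ->
  exists col' : {set T} -> 'I_r.+1, good_coloring e r V col'.
Proof.
move=> Hear Hr Hcol.
pose s := a :: rcons m b.
pose col' := (fun S : {set T} => if [exists x in S, x \in m]
  then inord (((\sum_(x in S) index x s)./2) %% r.+1) else col S).
exists col'.
move=> c Hc; case: (boolP (has (fun x => x \in m) c)).
- case/hasP => x xc xm.
  have Hall := s_all_in Hear Hc xc xm.
  have Us : uniq s := s_uniq Hear.
  have Ss : size s = (size m).+2 := s_size a m b.
  suff -> : cycle_colors col' c = setT by rewrite cardsT card_ord geq_minr.
  apply/eqP; rewrite eqEsubset subsetT /=; apply/subsetP => k _.
  have kL : k <= size m by rewrite -ltnS (leq_trans (ltn_ord k)).
  have [x0 x0c Ex0] : exists2 x0, x0 \in c &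
      [set x0; next c x0] = [set nth a s k; nth a s k.+1].
    case: (ltnP k (size m)) => kL'.
      have [n1 _] := s_nb Hear kL'.
      have uc : nth a s k.+1 \in c by apply: Hall; rewrite ltnS ltnW.
      case: (cycle_edge Hc uc (s_deg Hear kL') n1) => x0 x0c E.
      by exists x0; rewrite // E setUC.
    have kE : (k : nat) = size m by apply/eqP; rewrite eqn_leq kL kL'.
    have mpos : 0 < size m by case: (m) xm.
    have [j kj] : exists j, (k : nat) = j.+1 by exists (size m).-1; rewrite kE prednK.
    rewrite kj.
    have jL : j < size m by rewrite -kE kj.
    have [_ n2] := s_nb Hear jL.
    have uc : nth a s j.+1 \in c by apply: Hall; rewrite ltnS ltnW.
    case: (cycle_edge Hc uc (s_deg Hear jL) n2) => x0 x0c E.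
    by exists x0.
  apply/imsetP; exists x0 => //; rewrite Ex0 /col'.
  have kS : k < size s by rewrite Ss ltnS ltnW // ltnS.
  have k1S : k.+1 < size s by rewrite Ss !ltnS.
  have neq : nth a s k != nth a s k.+1.
    by rewrite nth_uniq // ltn_eqF.
  have -> : [exists x in [set nth a s k; nth a s k.+1], x \in m].
    case: (ltnP k (size m)) => kL'.
      apply/existsP; exists (nth a s k.+1); rewrite !inE eqxx orbT /=.
      exact: s_in_m.
    have kE : (k : nat) = size m by apply/eqP; rewrite eqn_leq kL kL'.
    have mpos : 0 < size m by case: (m) xm.
    have [j kj] : exists j, (k : nat) = j.+1 by exists (size m).-1; rewrite kE prednK.
    rewrite kj.
    apply/existsP; exists (nth a s j.+1); rewrite !inE eqxx /=.
    by apply: s_in_m; rewrite -kE kj.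
  rewrite big_setU1 ?inE // big_set1 !index_uniq //.
  apply: val_inj; rewrite /= inordK ?ltn_pmod //.
  rewrite addnS addnn -[(k.*2).+1]/(true + k.*2) half_bit_double modn_small //. 
- move=> Hn.
  have Hav : forall x, x \in c -> x \notin [set x in m].
    by move=> x xc; rewrite inE; apply: contra Hn => xm; apply/hasP; exists x.
  have HcW := cycle_sub Hc Hav.
  have := Hcol c HcW.
  suff -> : cycle_colors col' c = cycle_colors col c by [].
  rewrite /cycle_colors; apply: eq_in_imset => x xc /=.
  rewrite /col'.
  case: existsP => // -[y /andP [/set2P [] -> ym]].
    by move: (Hav x xc); rewrite inE ym.
  by move: (Hav (next c x)); rewrite mem_next inE ym => /(_ xc).
Qed.


Lemma upper r V : path_degenerate e r.+1 V ->
  exists col : {set T} -> 'I_r.+1, good_coloring e r V col.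
Proof.
elim=> [|{}V W Hred _ [col Hcol]].
  exists (fun _ => ord0) => c [_ Sc /allP A _].
  by move: Sc A; case: c => [//|x c] _ /(_ x); rewrite inE eqxx inE => /(_ isT).
case: Hred Hcol.
- move=> v _ dv Hcol; exists col => c Hc.
  by apply: Hcol; apply: (cycle_sub Hc); apply: (cycle_avoid_low Hc); rewrite dv.
- move=> v _ dv Hcol; exists col => c Hc.
  by apply: Hcol; apply: (cycle_sub Hc); apply: (cycle_avoid_low Hc); rewrite dv.
- move=> a m b Hear Hm Hcol; exact: ear_color Hear Hm Hcol.
Qed.

Lemma lower r V : path_degenerate e r.+1 V ->
  forall c, is_cycle e V c -> exists c', is_cycle e V c' /\ r.+1 <= size c'.
Proof.
elim=> [|{}V W Hred _ IH] c Hc.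
  case: Hc => _ Sc /allP A _.
  by move: Sc A; case: c => [//|x c] _ /(_ x); rewrite inE eqxx inE => /(_ isT).
have lift : forall c', is_cycle e W c' -> is_cycle e V c'.
  move=> c' [U S /allP A C]; split => //; apply/allP => x /A.
  case: Hred => [v _ _|v _ _|a m b _ _]; rewrite inE => /andP [].
  - by [].
  - by [].
  - by [].
have viaW : forall X : {set T}, W = V :\: X ->
    (forall x, x \in c -> x \notin X) -> exists c', is_cycle e V c' /\ r.+1 <= size c'.
  move=> X WE Hav; have HcW : is_cycle e W c by rewrite WE; apply: cycle_sub.
  by case: (IH c HcW) => c' [Hc' Sc']; exists c'; split => //; apply: lift.
case: Hred IH lift viaW => [v _ dv|v _ dv|a m b Hear Hm] IH lift viaW.
- by apply: (viaW [set v] erefl); apply: (cycle_avoid_low Hc); rewrite dv.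
- by apply: (viaW [set v] erefl); apply: (cycle_avoid_low Hc); rewrite dv.
- case: (boolP (has (fun x => x \in m) c)).
    case/hasP => x xc xm; exists c; split => //.
    have := s_size_cycle Hear Hc xc xm.
    by move=> H; apply: leq_trans H; apply: leq_trans Hm _; rewrite ltnW.
  move=> Hn; apply: (viaW [set x in m]) => // x xc.
  by rewrite inE; apply: contra Hn => xm; apply/hasP; exists x.
Qed.

End Proof.

From Stdlib Require Import Classical.

Theorem mainTheorem10 (T : finType) (e : rel T) (r : nat) :
  simple_graph e -> 1 <= r ->
  path_degenerate e r.+1 [set: T] ->
  (forest e [set: T] -> arb_is e r [set: T] 1) /\
  (~ forest e [set: T] -> arb_is e r [set: T] r.+1).
Proof.
move=> [esym eirr] r1 Hpd; split.
- move=> Hf; split.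
    by exists (fun _ => ord0) => c /Hf.
  by move=> k' [col _]; exact: leq_ltn_trans (leq0n _) (ltn_ord (col set0)).
- move=> Hnf; split; first exact: upper Hpd.
  move=> k' [col Hcol].
  have [c Hc] : exists c, is_cycle e [set: T] c.
    by apply: NNPP => Hne; apply: Hnf => c Hc; apply: Hne; exists c.
  have [c' [Hc' Sc']] := lower esym Hpd Hc.
  have := Hcol c' Hc'; rewrite (minn_idPr Sc') => H.
  by apply: leq_trans H _; rewrite -[k' in _ <= k']card_ord max_card.
Qed.
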